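(* Let $\Sigma,\Gamma$ be finite alphabets, $k>0$, $f:\Sigma^*\to\Gamma^*$, and $\tau$ a tier on $\Sigma\cup\Gamma$. If $f$ is $k$-TISL on tier $\tau$, then there is a tier $\upsilon$ on $\Sigma\times\Gamma^*$ such that $f$ is $k$-TSSL on tier $\upsilon$. Likewise, if $f$ is $k$-TOSL on tier $\tau$, then there is a tier $\varphi$ on $\Sigma\times\Gamma^*$ such that $f$ is $k$-TSSL on tier $\varphi$.
   Context: Strings: $\lambda$ is the empty string; $\rtimes$ is a boundary symbol not in any alphabet. For $m\ge0$, $\mathrm{suff}^m(x)$ is the string of the last $m$ symbols of $\rtimes^mx$. $\mathrm{lcp}(A)$ is the longest common prefix of a set of strings $A$. For $f:\Sigma^*\to\Gamma^*$: $f^{\gets}(x):=\mathrm{lcp}(\{f(xy)\mid y\in\Sigma^*\})$, and $f^{\to}_x$ is defined by $f(xy)=f^{\gets}(x)f^{\to}_x(y)$. A tier on a (possibly infinite) alphabet $A$ is a homomorphism $\tau:A^*\to A^*$ with $\tau(a)\in\{a,\lambda\}$ for each $a\in A$. Given $i,j>0$ and a tier $\tau$ on $\Sigma\cup\Gamma$, $f$ is $i,j$-TIOSL on $\tau$ if for all $w,x\in\Sigma^*$, $\mathrm{suff}^{i-1}(\tau(w))=\mathrm{suff}^{i-1}(\tau(x))$ and $\mathrm{suff}^{j-1}(\tau(f^{\gets}(w)))=\mathrm{suff}^{j-1}(\tau(f^{\gets}(x)))$ imply $f^{\to}_w=f^{\to}_x$. $f$ is $k$-TISL on $\tau$ if it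 is $k,1$-TIOSL on $\tau$, and $k$-TOSL on $\tau$ if it is $1,k$-TIOSL on $\tau$. Actions of $f$: $\mathbb{A}_f:=\{\langle x,y\rangle\in\Sigma\times\Gamma^*\mid\exists z\in\Sigma^*.\ f^{\gets}(zx)=f^{\gets}(z)y\}$, written $x:y$. The run $f^{\Leftarrow}(x)\in\mathbb{A}_f^*$: if $|x|\le1$, $f^{\Leftarrow}(x):=x:f^{\gets}(x)$; if $x=yz$ with $|y|\ge1$, $|z|=1$, then $f^{\Leftarrow}(x):=f^{\Leftarrow}(y)(z:w)$ where $f^{\gets}(x)=f^{\gets}(y)w$. For a tier $\upsilon$ on $\Sigma\times\Gamma^*$, $f$ is $k$-TSSL on $\upsilon$ if for all $x,y\in\Sigma^*$, $\mathrm{suff}^{k-1}(\upsilon(f^{\Leftarrow}(x)))=\mathrm{suff}^{k-1}(\upsilon(f^{\Leftarrow}(y)))$ implies $f^{\to}_x=f^{\to}_y$. *)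

(* Defs.v *)
From mathcomp Require Import all_boot.
From mathcomp Require Import boolp.
Set Implicit Arguments. Unset Strict Implicit. Unset Printing Implicit Defensive.

(* suff^m(x): last m symbols of (boundary^m x); None plays the boundary symbol *)
Definition suff {T : Type} (m : nat) (x : seq T) : seq (option T) :=
  drop (size x) (nseq m None ++ map Some x).

(* longest common prefix of a set A of strings, given a member a of A:
   the longest prefix of a that is a prefix of every member of A *)
Definition lcp_of {G : eqType} (A : seq G -> Prop) (a : seq G) : seq G :=
  take (\max_(n < (size a).+1 | `[< forall b, A b -> prefix (take n a) b >]) n) a.

Section Fun.
Variables (S G : eqType) (f : seq S -> seq G).

Definition fleft (x : seq S) : seq G :=
  lcp_of (fun z => exists y, z = f (x ++ y)) (f x).

(* f^{->}_x(y), defined by f(xy) = f^{<-}(x) f^{->}_x(y) *)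
Definition fright (x : seq S) (y : seq S) : seq G :=
  drop (size (fleft x)) (f (x ++ y)).

Fixpoint run_rev (rx : seq S) : seq (S * seq G) :=
  match rx with
  | [::] => [::]
  | [:: a] => [:: (a, fleft [:: a])]
  | z :: ry => rcons (run_rev ry)
                 (z, drop (size (fleft (rev ry))) (fleft (rev (z :: ry))))
  end.

Definition run (x : seq S) : seq (S * seq G) := run_rev (rev x).
End Fun.

(* A tier on an alphabet A is given by the predicate of symbols kept on the
   tier; tau(x) = filter. The alphabet Sigma ∪ Gamma is the sum type S + G. *)
Definition tierS {S G : Type} (tau : pred (S + G)) (w : seq S) : seq S :=
  [seq a <- w | tau (inl a)].
Definition tierG {S G : Type} (tau : pred (S + G)) (u : seq G) : seq G :=
  [seq b <- u | tau (inr b)].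

Definition TIOSL {S G : eqType} (i j : nat) (tau : pred (S + G))
  (f : seq S -> seq G) : Prop :=
  forall w x : seq S,
    suff (i - 1) (tierS tau w) = suff (i - 1) (tierS tau x) ->
    suff (j - 1) (tierG tau (fleft f w)) = suff (j - 1) (tierG tau (fleft f x)) ->
    fright f w =1 fright f x.

Definition TISL {S G : eqType} (k : nat) tau (f : seq S -> seq G) := TIOSL k 1 tau f.
Definition TOSL {S G : eqType} (k : nat) tau (f : seq S -> seq G) := TIOSL 1 k tau f.

Definition TSSL {S G : eqType} (k : nat) (ups : pred (S * seq G))
  (f : seq S -> seq G) : Prop :=
  forall x y : seq S,
    suff (k - 1) [seq a <- run f x | ups a] = suff (k - 1) [seq a <- run f y | ups a] ->
    fright f x =1 fright f y.

(* Main.v *)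
Require Import Defs.
From mathcomp Require Import all_boot.
From mathcomp Require Import boolp zify.

Definition lastn {T : Type} (m : nat) (s : seq T) := drop (size s - m) s.

Lemma size_lastn T m (s : seq T) : size (lastn m s) = minn m (size s).
Proof. rewrite /lastn size_drop; lia. Qed.

Lemma suffE T m (s : seq T) :
  suff m s = nseq (m - size (lastn m s)) None ++ map Some (lastn m s).
Proof.
rewrite /suff /lastn drop_cat size_nseq size_drop.
case: ltnP => h.
  rewrite drop_nseq.
  have -> : size s - m = 0 by lia.
  rewrite drop0; congr (nseq _ _ ++ _); lia.
have -> : m - (size s - (size s - m)) = 0 by lia.
by rewrite map_drop.
Qed.

Lemma pmap_nseqNone T n (u : seq T) : pmap id (nseq n None ++ map Some u) = u.
Proof. elim: n => [|n IH] //=; elim: u => [|a u IHu] //=; by rewrite IHu. Qed.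

Lemma suff_eq T m (s t : seq T) : suff m s = suff m t -> lastn m s = lastn m t.
Proof. by rewrite !suffE => /(f_equal (pmap id)); rewrite !pmap_nseqNone. Qed.

Arguments suff_eq {T m s t}.

Lemma eq_suff T m (s t : seq T) : lastn m s = lastn m t -> suff m s = suff m t.
Proof. by rewrite !suffE => ->. Qed.

Lemma lastn_map T1 T2 (g : T1 -> T2) m s : lastn m (map g s) = map g (lastn m s).
Proof. by rewrite /lastn size_map map_drop. Qed.

Lemma lastn_cat T m (a b : seq T) : m <= size b -> lastn m (a ++ b) = lastn m b.
Proof.
move=> h; rewrite /lastn drop_cat size_cat.
case: ltnP => h2; first lia.
congr drop; lia.
Qed.

Lemma size_flatten_ge (T : eqType) (l : seq (seq T)) :
  (forall x, x \in l -> x != [::]) -> size l <= size (flatten l).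
Proof.
elim: l => [|x l IH] //= H.
rewrite size_cat.
have : x != [::] by apply: H; rewrite inE eqxx.
case: x H => [|y x] H //= _.
have := IH (fun z hz => H z ltac:(by rewrite inE hz orbT)); lia.
Qed.

Lemma lastn_flatten (T : eqType) m (l1 l2 : seq (seq T)) :
  (forall x, x \in l1 -> x != [::]) -> (forall x, x \in l2 -> x != [::]) ->
  lastn m l1 = lastn m l2 -> lastn m (flatten l1) = lastn m (flatten l2).
Proof.
move=> H1 H2 E.
have Es := f_equal size E; rewrite !size_lastn in Es.
case: (leqP m (size l1)) => h.
  have h2 : m <= size l2 by lia.
  rewrite -(cat_take_drop (size l1 - m) l1) -(cat_take_drop (size l2 - m) l2).
  rewrite !flatten_cat -/(lastn m l1) -/(lastn m l2) E.
  have hb : m <= size (flatten (lastn m l2)).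
    have hs := @size_flatten_ge T (lastn m l2) (fun x hx => H2 x (mem_drop hx)).
    rewrite size_lastn in hs; lia.
  by rewrite !lastn_cat.
have h2 : size l2 < m by lia.
move: E; rewrite /lastn.
have -> : size l1 - m = 0 by lia.
have -> : size l2 - m = 0 by lia.
by rewrite !drop0 => ->.
Qed.

Section Lcp.
Variable G : eqType.

Lemma lcp_of_prefix (A : seq G -> Prop) a b : A b -> prefix (lcp_of A a) b.
Proof.
rewrite /lcp_of.
move: b; apply: (big_ind (fun N => forall b, A b -> prefix (take N a) b)).
- by move=> b _; rewrite take0 prefix0s.
- move=> x y Hx Hy b hb.
  have [E|E] : maxn x y = x \/ maxn x y = y by lia.
    by rewrite E; apply: Hx.
  by rewrite E; apply: Hy.
- by move=> i /asboolP.
Qed.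

Lemma lcp_of_max (A : seq G -> Prop) a c :
  prefix c a -> (forall b, A b -> prefix c b) -> prefix c (lcp_of A a).
Proof.
move=> hca hA.
have hs : size c < (size a).+1 by rewrite ltnS size_prefix.
have ec : take (size c) a = c by apply/eqP; rewrite -prefixE.
have hP : `[< forall b, A b -> prefix (take (size c) a) b >].
  by apply/asboolP; rewrite ec.
have := @leq_bigmax_cond _
  (fun i : 'I_(size a).+1 => `[< forall b, A b -> prefix (take i a) b >])
  (fun i : 'I_(size a).+1 => nat_of_ord i) (Ordinal hs) hP.
rewrite /lcp_of => /= hle.
rewrite prefixE; apply/eqP.
by rewrite take_takel // ec.
Qed.
End Lcp.

Section Run.
Variables (S G : eqType) (f : seq S -> seq G).

Lemma fleft_prefix x y : prefix (fleft f x) (fleft f (x ++ y)).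
Proof.
rewrite /fleft; apply: lcp_of_max.
  by apply: lcp_of_prefix; exists y.
move=> b [z ->]; apply: lcp_of_prefix; exists (y ++ z); by rewrite catA.
Qed.

Lemma run_rev_cons a b ry : run_rev f [:: a, b & ry] =
  rcons (run_rev f (b :: ry))
    (a, drop (size (fleft f (rev (b :: ry)))) (fleft f (rev [:: a, b & ry]))).
Proof. by []. Qed.

Lemma run_rev_fst rx : map fst (run_rev f rx) = rev rx.
Proof.
elim: rx => [|a l IH] //.
case: l IH => [|b ry] IH //.
by rewrite run_rev_cons map_rcons IH (rev_cons a (b :: ry)).
Qed.

Lemma run_fst x : map fst (run f x) = x.
Proof. by rewrite /run run_rev_fst revK. Qed.

Lemma run_rev_flat rx : rx != [::] ->
  flatten (map snd (run_rev f rx)) = fleft f (rev rx).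
Proof.
elim: rx => [|a l IH] // _.
case: l IH => [|b ry] IH; first by rewrite /= cats0.
rewrite run_rev_cons.
rewrite map_rcons -cats1 flatten_cat IH //= cats0.
rewrite (rev_cons a (b :: ry)) -cats1.
have /prefixP [s ->] := fleft_prefix (rev (b :: ry)) [:: a].
by rewrite drop_size_cat.
Qed.

Lemma run_flat x : x != [::] -> flatten (map snd (run f x)) = fleft f x.
Proof.
move=> hx; rewrite /run run_rev_flat ?revK //.
by rewrite -size_eq0 size_rev size_eq0.
Qed.
End Run.

Lemma suff0 T (s : seq T) : suff 0 s = [::].
Proof. by rewrite /suff /= drop_oversize // size_map. Qed.

Theorem proposition17 (S G : finType) (k : nat) (f : seq S -> seq G)
  (tau : pred (S + G)) :
  0 < k ->
  (TISL k tau f -> exists ups : pred (S * seq G), TSSL k ups f) /\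
  (TOSL k tau f -> exists phi : pred (S * seq G), TSSL k phi f).
Proof.
move=> k0; split.
  move=> HT; exists (fun p => tau (inl p.1)) => x y H.
  apply: HT; last by rewrite !suff0.
  apply: eq_suff.
  have E : forall z, tierS tau z =
      map fst [seq a <- run f z | tau (inl a.1)].
    by move=> z; rewrite /tierS -{1}(@run_fst _ _ f z) filter_map.
  by rewrite !E !lastn_map (suff_eq H).
move=> HT.
set phi := fun p : S * seq G => has (fun b => tau (inr b)) p.2.
exists phi => x y H.
apply: HT; first by rewrite !suff0.
set m := k - 1.
set h := fun p : S * seq G => tierG tau p.2.
have L := suff_eq H.
have Hne : forall z w, w \in map h [seq a <- run f z | phi a] -> w != [::].
  move=> z w /mapP [p]; rewrite mem_filter /phi /h => /andP [hp _] ->.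
  by rewrite /tierG -has_filter.
have key : forall l : seq (S * seq G),
    tierG tau (flatten (map snd l)) = flatten (map h [seq a <- l | phi a]).
  elim=> [|p l IH] //=.
  have e : forall r, tierG tau (p.2 ++ r) = tierG tau p.2 ++ tierG tau r.
    by move=> r; rewrite /tierG filter_cat.
  rewrite e IH.
  case hp: (phi p) => //=.
  move/negbT: hp; rewrite /phi has_filter negbK => /eqP.
  by rewrite /h /tierG => ->.
have Tn : forall z, z != [::] ->
    tierG tau (fleft f z) = flatten (map h [seq a <- run f z | phi a]).
  by move=> z hz; rewrite -key run_flat.
have lastn0 : forall (T : Type) (l : seq T), lastn 0 l = [::].
  by move=> T l; rewrite /lastn subn0 drop_size.
have side : forall z, z != [::] -> [::] = lastn m [seq a <- run f z | phi a] ->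
    lastn m (tierG tau (fleft f [::])) = lastn m (tierG tau (fleft f z)).
  move=> z hz E.
  case: (posnP m) => hm; first by rewrite hm !lastn0.
  have Ez : [seq a <- run f z | phi a] = [::].
    have := f_equal size E; rewrite size_lastn /=.
    by case: [seq a <- run f z | phi a] => //= ? ? ; lia.
  have e1 : tierG tau (fleft f z) = [::] by rewrite Tn // Ez.
  have : prefix (tierG tau (fleft f [::])) (tierG tau (fleft f z)).
    have /prefixP [s ->] := @fleft_prefix _ _ f [::] z.
    by rewrite /tierG filter_cat prefix_prefix.
  by rewrite e1 prefixs0 => /eqP ->.
apply: eq_suff.
case: (eqVneq x [::]) => hx; case: (eqVneq y [::]) => hy.
- by rewrite hx hy.
- by rewrite hx; apply: side => //; move: L; rewrite hx.
- by rewrite hy; symmetry; apply: side => //; move: L; rewrite hy.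
rewrite !Tn //; apply: lastn_flatten; try exact: Hne.
by rewrite !lastn_map L.
Qed.
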